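(* Let $S\subseteq M_n$ be a noncommutative graph. Then $\mathcal{H}(S)$ equals the minimum $k$ such that there exist $m\in\mathbb{N}$ and matrices $E_1,\dots,E_m,F_1,\dots,F_m\in M_{k\times n}$ with $\sum_{i=1}^m F_i^\dagger E_i=I_n$ (equivalently, the linear map $\Psi:M_n\to M_k$, $\Psi(X)=\sum_{i=1}^m E_iXF_i^\dagger$, is trace-preserving) and $T_\Psi:=\mathrm{span}\{F_i^\dagger E_j:\ i,j\in[m]\}\subseteq S$.
   Context: All scalars are complex; $M_{k\times n}$ denotes complex $k\times n$ matrices and $M_n=M_{n\times n}$. A noncommutative graph is a linear subspace $S\subseteq M_n$ that contains $I_n$ and is closed under conjugate transpose. For a subspace $S\subseteq M_n$, $M_m(S)$ denotes the set of $m\times m$ block matrices $B=[B_{i,j}]_{i,j\in[m]}$ with every block $B_{i,j}\in S$, viewed as elements of $M_{mn}$. The Haemers bound is $\mathcal{H}(S)=\min\{\mathrm{rk}(B):\ m\in\mathbb{N},\ B\in M_m(S),\ \sum_{i=1}^m B_{i,i}=I_n\}$. Every trace-preserving linear map $M_n\to M_k$ can be written as $X\mapsto\sum_i E_iXF_i^\dagger$ with $\sum_i F_i^\dagger E_i=I_n$. *)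

(* Defs.v *)
From HB Require Import structures.
From mathcomp Require Import all_boot all_order all_algebra.
From mathcomp Require Import reals.
From mathcomp Require Import complex.
Set Implicit Arguments. Unset Strict Implicit. Unset Printing Implicit Defensive.
Import Order.TTheory GRing.Theory Num.Theory.
Local Open Scope ring_scope.

Definition mxadj (C : numClosedFieldType) (p q : nat) (A : 'M[C]_(p, q)) : 'M[C]_(q, p) :=
  (map_mx Num.conj A)^T.

Definition nc_graph (C : numClosedFieldType) (n : nat) (S : {vspace 'M[C]_n}) : Prop :=
  (1%:M \in S) /\ (forall A : 'M[C]_n, A \in S -> mxadj A \in S).

Definition haemers_feasible (C : numClosedFieldType) (n : nat)
    (S : {vspace 'M[C]_n}) (r : nat) : Prop :=
  exists (m : nat) (B : 'I_m -> 'I_m -> 'M[C]_n),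
    (forall i j, B i j \in S) /\
    \sum_(i < m) B i i = 1%:M /\
    \rank (\mxblock_(i < m, j < m) B i j) = r.

Definition T_Psi (C : numClosedFieldType) (n k m : nat)
    (E F : 'I_m -> 'M[C]_(k, n)) : {vspace 'M[C]_n} :=
  <<[seq mxadj (F i) *m E j | i <- enum 'I_m, j <- enum 'I_m]>>%VS.

Definition kraus_feasible (C : numClosedFieldType) (n : nat)
    (S : {vspace 'M[C]_n}) (k : nat) : Prop :=
  exists (m : nat) (E F : 'I_m -> 'M[C]_(k, n)),
    \sum_(i < m) mxadj (F i) *m E i = 1%:M /\
    (T_Psi E F <= S)%VS.

Definition is_min (P : nat -> Prop) (k : nat) : Prop :=
  P k /\ forall k', P k' -> (k <= k')%N.

Definition haemers_is (C : numClosedFieldType) (n : nat)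
    (S : {vspace 'M[C]_n}) (h : nat) : Prop :=
  is_min (haemers_feasible S) h.

(* Main.v *)
Require Import Defs.
From HB Require Import structures.
From mathcomp Require Import all_boot all_order all_algebra.
From mathcomp Require Import reals.
From mathcomp Require Import complex.
Local Open Scope ring_scope.
Import GRing.Theory Num.Theory.

Section Aux.
Variable C : numClosedFieldType.

Lemma mxadjK (p q : nat) (A : 'M[C]_(p, q)) : mxadj (mxadj A) = A.
Proof.
apply/matrixP => i j; rewrite /mxadj !mxE; exact: conjCK.
Qed.

Lemma submx_blockM m n r (X : 'M[C]_(\sum_(i < m) n, r)) (Y : 'M[C]_(r, \sum_(j < m) n)) i j :
  submxblock (X *m Y) i j = submxcol X i *m submxrow Y j.
Proof. by rewrite submxblockEv -submxcol_mul -mul_submxrow. Qed.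

Lemma h_to_k (n : nat) (S : {vspace 'M[C]_n}) r :
  haemers_feasible S r -> kraus_feasible S r.
Proof.
case=> m [B [BS [Bsum Brk]]].
set M := \mxblock_(i < m, j < m) B i j in Brk.
set cb := col_base M; set rb := row_base M.
have BE i j : B i j = submxcol cb i *m submxrow rb j.
  have H := @submx_blockM _ _ _ cb rb i j; rewrite /cb /rb mulmx_base in H.
  by rewrite -H /M mxblockK.
clearbody cb rb.
rewrite -Brk.
exists m, (fun j => submxrow rb j), (fun i => mxadj (submxcol cb i)).
split.
  rewrite -Bsum; apply: eq_bigr => i _; by rewrite mxadjK BE.
rewrite /T_Psi; apply/span_subvP => x /allpairsP [[i j] [_ _ ->]] /=.
by rewrite mxadjK -BE.
Qed.

Lemma k_to_h (n : nat) (S : {vspace 'M[C]_n}) k :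
  kraus_feasible S k -> exists2 r, haemers_feasible S r & (r <= k)%N.
Proof.
case=> m [E [F [Esum ES]]].
pose B i j := mxadj (F i) *m E j.
exists (\rank (\mxblock_(i < m, j < m) B i j)).
  exists m, B; split => //.
  move=> i j; apply: (subvP ES); apply: memv_span.
  by apply: allpairs_f; rewrite mem_enum.
have -> : \mxblock_(i < m, j < m) B i j =
   (\mxcol_(i < m) mxadj (F i)) *m (\mxrow_(j < m) E j).
  rewrite mxblockEv mxcol_mul; apply: eq_mxcol => i.
  by rewrite mul_mxrow.
apply: leq_trans (mxrankM_maxr _ _) _; exact: rank_leq_row.
Qed.

End Aux.

Theorem mainTheorem6 (R : realType) (n : nat) (S : {vspace 'M[R[i]]_n}) :
  nc_graph S ->
  forall h : nat, haemers_is S h <-> is_min (kraus_feasible S) h.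
Proof.
move=> _ h; split.
  case=> Hh Hmin; split; first exact: (@h_to_k _ _ _ _).
  move=> k' /(@k_to_h _ _ _ _) [r Hr Hrk]; exact: leq_trans (Hmin _ Hr) Hrk.
case=> Hk Hmin.
have [r Hr Hrk] := @k_to_h _ _ _ _ Hk.
have Hrh : r = h by apply/eqP; rewrite eqn_leq Hrk Hmin //; exact: (@h_to_k _ _ _ _).
split; first by rewrite -Hrh.
move=> k' /(@h_to_k _ _ _ _); exact: Hmin.
Qed.
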